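(* Let $(\mathbf{L},\mathbf{R})\in\mathcal{P}_{\mathsf N}$ be balanced and suppose the associated inequality $\sum_{n=1}^{m_L}\mathsf S(X_n)\ge\sum_{n=1}^{m_R}\mathsf S(Y_n)$ is a holographic entropy inequality. Then $(\mathbf{L},\mathbf{R})$ obeys region dominance: for every nonempty $X\subseteq[\mathsf N+1]$, the number of columns of $\mathbf{L}$ having a $1$ in every row indexed by $X$ is at most the number of columns of $\mathbf{R}$ having a $1$ in every row indexed by $X$, i.e. $\big|\bigwedge_{i\in X}\mathbf{L}_{(i)}\big|\le\big|\bigwedge_{i\in X}\mathbf{R}_{(i)}\big|$.
   Context: $\mathcal{P}_{\mathsf N}$ denotes the set of pairs $(\mathbf{L},\mathbf{R})$ of $(0,1)$-matrices, $\mathbf{L}$ of size $(\mathsf N+1)\times m_L$ and $\mathbf{R}$ of size $(\mathsf N+1)\times m_R$, such that some index $p\in[\mathsf N+1]$ (the purifier) has row $p$ of $\mathbf{L}$ and row $p$ of $\mathbf{R}$ both zero. $\mathbf{A}_{(i)}$ is the $i$-th row; $|v|=\sum_k|v_k|$; $\wedge$ is bitwise AND. The pair is balanced if $|\mathbf{L}_{(i)}|=|\mathbf{R}_{(i)}|$ for all $i\in[\mathsf N+1]$. Let $X_n\subseteq[\mathsf N+1]$ be the set of rows in which column $n$ of $\mathbf{L}$ has a $1$, and $Y_n$ likewise for $\mathbf{R}$. Min-cut function: let $G$ be a finite undirected graph with vertex set $\mathscr V$, nonnegative edge weights $w$, and $\mathsf N+1$ distinguished distinct (external) vertices labeled $1,\dots,\mathsf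 N+1$. For $X\subseteq[\mathsf N+1]$, $\mathsf S_G(X)=\min\{\sum_{e\in\mathscr C(V)}w(e): V\subseteq\mathscr V,\ V\cap\{\text{external vertices}\}=\text{the vertices labeled by }X\}$, where $\mathscr C(V)$ is the set of edges with exactly one endpoint in $V$. The inequality is a holographic entropy inequality (HEI) if $\sum_n\mathsf S_G(X_n)\ge\sum_n\mathsf S_G(Y_n)$ holds for every such weighted graph $G$. *)

(* Defs.v *)
From HB Require Import structures.
From mathcomp Require Import all_boot all_order all_algebra.
Set Implicit Arguments. Unset Strict Implicit. Unset Printing Implicit Defensive.
Import Order.TTheory GRing.Theory Num.Theory.
Local Open Scope ring_scope.

(* (0,1)-matrices are boolean matrices 'M[bool]_(N.+1, m); rows are indexed
   by 'I_(N.+1) (representing [N+1]), columns by 'I_m. *)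

Definition in_PN (N mL mR : nat) (L : 'M[bool]_(N.+1, mL)) (R : 'M[bool]_(N.+1, mR)) : Prop :=
  exists p : 'I_(N.+1), (forall n, L p n = false) /\ (forall n, R p n = false).

Definition row_weight (N m : nat) (A : 'M[bool]_(N.+1, m)) (i : 'I_(N.+1)) : nat :=
  #|[set n : 'I_m | A i n]|.

Definition balanced (N mL mR : nat) (L : 'M[bool]_(N.+1, mL)) (R : 'M[bool]_(N.+1, mR)) : Prop :=
  forall i, row_weight L i = row_weight R i.

Definition col_region (N m : nat) (A : 'M[bool]_(N.+1, m)) (n : 'I_m) : {set 'I_(N.+1)} :=
  [set i | A i n].

(* Weighted undirected graph: finite vertex type V, symmetric nonnegative
   weight w x y (total weight of edges between x and y), and injective
   labelling ext of the N+1 external vertices. *)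
Definition cut_weight (K : realFieldType) (V : finType) (w : V -> V -> K) (U : {set V}) : K :=
  \sum_(x in U) \sum_(y in ~: U) w x y.

Definition feasible (N : nat) (V : finType) (ext : 'I_(N.+1) -> V)
    (X : {set 'I_(N.+1)}) (U : {set V}) : bool :=
  [forall i, (ext i \in U) == (i \in X)].

(* Min-cut function S_G(X); the set ext @: X is always feasible (ext injective),
   so it serves as the initial value of the min. *)
Definition mincut (K : realFieldType) (N : nat) (V : finType) (w : V -> V -> K)
    (ext : 'I_(N.+1) -> V) (X : {set 'I_(N.+1)}) : K :=
  \big[Num.min/cut_weight w (ext @: X)]_(U : {set V} | feasible ext X U) cut_weight w U.

Definition HEI (K : realFieldType) (N mL mR : nat)
    (L : 'M[bool]_(N.+1, mL)) (R : 'M[bool]_(N.+1, mR)) : Prop :=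
  forall (V : finType) (w : V -> V -> K) (ext : 'I_(N.+1) -> V),
    (forall x y, 0 <= w x y) -> (forall x y, w x y = w y x) -> injective ext ->
    \sum_(n < mR) mincut w ext (col_region R n)
      <= \sum_(n < mL) mincut w ext (col_region L n).

Definition region_count (N m : nat) (A : 'M[bool]_(N.+1, m)) (X : {set 'I_(N.+1)}) : nat :=
  #|[set n : 'I_m | [forall i in X, A i n]]|.

Definition region_dominance (N mL mR : nat)
    (L : 'M[bool]_(N.+1, mL)) (R : 'M[bool]_(N.+1, mR)) : Prop :=
  forall X : {set 'I_(N.+1)}, X != set0 -> (region_count L X <= region_count R X)%N.

(* Main.v *)
Require Import Defs.
From mathcomp Require Import all_boot all_order all_algebra.
From mathcomp Require Import reals.
Set Implicit Arguments. Unset Strict Implicit. Unset Printing Implicit Defensive.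
Import Order.TTheory GRing.Theory Num.Theory.
Local Open Scope ring_scope.

Section Star.
Variables (K : realFieldType) (N : nat).
Local Notation V := 'I_(N.+2).
Definition ee (i : 'I_(N.+1)) : V := widen_ord (leqnSn N.+1) i.
Definition cc : V := ord_max.
Variable G : V -> K.
Definition ww (x y : V) : K := if x == cc then G y else if y == cc then G x else 0.

Lemma ee_inj : injective ee.
Proof. by move=> i j /(congr1 val) /= /val_inj. Qed.

Lemma ee_cc i : (ee i == cc) = false.
Proof. by apply/negbTE; rewrite -val_eqE /= neq_ltn ltn_ord. Qed.

Hypothesis Gc : G cc = 0.

Lemma inner_sum (U : {set V}) x : \sum_(y in ~: U) ww x y =
   \sum_i (if ee i \in U then 0 else ww x (ee i)) + (if cc \in U then 0 else ww x cc).
Proof.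
rewrite big_mkcond /= big_ord_recr /=.
congr (_ + _); last by rewrite in_setC; case: (_ \in U).
by apply: eq_bigr => i _; rewrite in_setC /ee; case: (_ \in U).
Qed.

Lemma cut_star (U : {set V}) : cut_weight ww U =
  if cc \in U then \sum_i (if ee i \in U then 0 else G (ee i))
  else \sum_i (if ee i \in U then G (ee i) else 0).
Proof.
rewrite /cut_weight big_mkcond /= big_ord_recr /=.
rewrite (eq_bigr (fun i => if ee i \in U then (if cc \in U then 0 else G (ee i)) else 0)); last first.
  move=> i _; rewrite -/(ee i); case: ifP => // _.
  rewrite inner_sum big1; last by move=> j _; rewrite /ww !ee_cc; case: ifP.
  by rewrite add0r /ww ee_cc eqxx.
rewrite -/cc inner_sum /ww eqxx Gc.
case: (boolP (cc \in U)) => Hc.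
  by rewrite big1 ?add0r ?addr0 // => i _; case: ifP.
by rewrite ?addr0 ?add0r.
Qed.

Lemma feasE (Y : {set 'I_(N.+1)}) (U : {set V}) :
  feasible ee Y U -> forall i, (ee i \in U) = (i \in Y).
Proof. by move=> /forallP H i; apply/eqP; exact: H. Qed.

Lemma mincut_star (Y : {set 'I_(N.+1)}) : mincut ww ee Y =
  Num.min (\sum_i (if i \in Y then G (ee i) else 0))
          (\sum_i (if i \in Y then 0 else G (ee i))).
Proof.
set A := \sum_i (if i \in Y then G (ee i) else 0); set B := \sum_i (if i \in Y then 0 else G (ee i)).
have cutF U : feasible ee Y U -> cut_weight ww U = if cc \in U then B else A.
  move=> /feasE H; rewrite cut_star /A /B; case: ifP => _;
  by apply: eq_bigr => i _; rewrite H.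
have ccY : cc \in ee @: Y = false.
  by apply/negbTE/imsetP => -[i _ /eqP]; rewrite eq_sym ee_cc.
have F1 : feasible ee Y (ee @: Y) by apply/forallP => i; rewrite mem_imset //; exact: ee_inj.
have F2 : feasible ee Y (cc |: ee @: Y).
  by apply/forallP => i; rewrite in_setU1 ee_cc mem_imset //; exact: ee_inj.
rewrite /mincut; apply/le_anti/andP; split.
  rewrite le_min; apply/andP; split.
    by apply: (bigmin_inf _ _ _ _ F1); rewrite cutF // ccY.
  by apply: (bigmin_inf _ _ _ _ F2); rewrite cutF // setU11.
apply/bigmin_geP; split.
  by rewrite cutF // ccY ge_min lexx ?orbT.
by move=> U /cutF ->; case: ifP => _; rewrite ge_min lexx ?orbT.
Qed.
End Star.

Lemma card_sumb (T : finType) (S : {set T}) : #|S| = (\sum_i ((i \in S) : nat))%N.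
Proof.
rewrite -sum1_card big_mkcond /=; apply: eq_bigr => i _; by case: (i \in S).
Qed.

From mathcomp Require Import zify.

Section Spec.
Variables (K : realFieldType) (N : nat) (X : {set 'I_(N.+1)}) (p : 'I_(N.+1)).
Hypothesis pX : p \notin X.
Hypothesis X0 : X != set0.
Definition kn := (#|X|).-1.
Definition gn (i : 'I_(N.+1)) : nat := ((i \in X) + (i == p) * kn)%N.
Definition GG (v : 'I_(N.+2)) : K := if insub (val v) is Some i then (gn i)%:R else 0.

Lemma GG_ee i : GG (ee i) = (gn i)%:R.
Proof. by rewrite /GG /= (valK i). Qed.

Lemma GG_cc : GG (cc N) = 0.
Proof. by rewrite /GG insubF //= ltnn. Qed.

Lemma SA (Y : {set 'I_(N.+1)}) : p \notin Y ->
  (\sum_i (if i \in Y then gn i else 0) = #|X :&: Y|)%N.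
Proof.
move=> pY; rewrite card_sumb; apply: eq_bigr => i _; rewrite in_setI /gn.
case: (boolP (i \in Y)) => iY; last by rewrite andbF.
have -> : (i == p) = false by apply/negbTE; apply: contraNneq pY => <-.
by rewrite mul0n addn0 andbT.
Qed.

Lemma SB (Y : {set 'I_(N.+1)}) : p \notin Y ->
  (\sum_i (if i \in Y then 0 else gn i) = #|X :\: Y| + kn)%N.
Proof.
move=> pY; rewrite card_sumb.
have -> : kn = (\sum_i ((i == p) * kn))%N.
  by rewrite (bigD1 p) //= eqxx mul1n big1 ?addn0 // => i /negbTE ->.
rewrite -big_split /=; apply: eq_bigr => i _; rewrite in_setD /gn.
case: (boolP (i \in Y)) => iY //=.
by have -> : (i == p) = false by apply/negbTE; apply: contraNneq pY => <-.
Qed.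

Lemma mincut_val (Y : {set 'I_(N.+1)}) : p \notin Y ->
  mincut (ww GG) (@ee N) Y = (#|X :&: Y| - (X \subset Y))%:R.
Proof.
move=> pY; rewrite mincut_star; last exact: GG_cc.
have -> : \sum_i (if i \in Y then GG (ee i) else 0) =
          (\sum_i (if i \in Y then gn i else 0))%N%:R.
  by rewrite natr_sum; apply: eq_bigr => i _; rewrite GG_ee; case: ifP.
have -> : \sum_i (if i \in Y then 0 else GG (ee i)) =
          (\sum_i (if i \in Y then 0 else gn i))%N%:R.
  by rewrite natr_sum; apply: eq_bigr => i _; rewrite GG_ee; case: ifP.
rewrite SA // SB //.
have hc := cardsID Y X.
have hx : (0 < #|X|)%N by rewrite card_gt0.
rewrite /kn; case: (boolP (X \subset Y)) => XY.
  have /eqP hd : X :\: Y == set0 by rewrite setD_eq0.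
  rewrite hd cards0 in hc *.
  rewrite min_r ?ler_nat /= -hc !addn0 add0n ?subn1 // leq_pred //.
have hd : (0 < #|X :\: Y|)%N by rewrite card_gt0 setD_eq0.
rewrite min_l ?ler_nat /= ?subn0 // -hc.
move: (#|X :&: Y|) (#|X :\: Y|) hd => a d hd; lia.
Qed.
End Spec.

Section Counting.
Variables (N m : nat) (A : 'M[bool]_(N.+1, m)) (X : {set 'I_(N.+1)}).

Lemma sumA : (\sum_n #|X :&: col_region A n| = \sum_(i in X) row_weight A i)%N.
Proof.
under eq_bigr do rewrite card_sumb.
rewrite exchange_big /= [RHS]big_mkcond /=; apply: eq_bigr => i _.
rewrite /row_weight card_sumb; case: (boolP (i \in X)) => iX.
  by apply: eq_bigr => n _; rewrite in_setI iX /col_region !inE.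
by rewrite big1 // => n _; rewrite in_setI (negbTE iX).
Qed.

Lemma subE n : (X \subset col_region A n) = [forall i in X, A i n].
Proof.
apply/subsetP/forall_inP => H i /H; by rewrite /col_region inE.
Qed.

Lemma sumS : (\sum_n ((X \subset col_region A n) : nat) = region_count A X)%N.
Proof.
rewrite /region_count card_sumb; apply: eq_bigr => n _; by rewrite subE inE.
Qed.

Lemma le_sa n : X != set0 -> ((X \subset col_region A n) <= #|X :&: col_region A n|)%N.
Proof.
move=> X0; case: (boolP (X \subset _)) => // /setIidPl ->.
by rewrite card_gt0.
Qed.

Lemma sum_h : X != set0 ->
  (\sum_n (#|X :&: col_region A n| - (X \subset col_region A n)) + region_count A X
   = \sum_(i in X) row_weight A i)%N.
Proof.
move=> X0; rewrite -sumS -big_split -sumA /=; apply: eq_bigr => n _.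
by rewrite subnK // le_sa.
Qed.
End Counting.

Theorem theorem5 (K : realType) (N mL mR : nat)
    (L : 'M[bool]_(N.+1, mL)) (R : 'M[bool]_(N.+1, mR)) :
  in_PN L R -> balanced L R -> HEI K L R -> region_dominance L R.
Proof.
move=> [p [hpL hpR]] hbal hHEI X X0.
case: (boolP (p \in X)) => pX.
  suff -> : region_count L X = 0%N by [].
  rewrite /region_count; apply/eqP; rewrite cards_eq0; apply/eqP/setP => n.
  rewrite !inE; apply/negbTE/forall_inP => /(_ p pX); by rewrite hpL.
have GG0 v : 0 <= GG K X p v by rewrite /GG; case: insub => [i|] //; exact: ler0n.
have := hHEI _ (ww (GG K X p)) (@ee N).
have H1 : forall x y, 0 <= ww (GG K X p) x y.
  by move=> x y; rewrite /ww; case: ifP => _ //; case: ifP.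
have H2 : forall x y, ww (GG K X p) x y = ww (GG K X p) y x.
  move=> x y; rewrite /ww; have [Ex|hx] := eqVneq x (cc N) => //.
  by case: eqP => [->|_] //; rewrite Ex.
move=> /(_ H1 H2 (@ee_inj N)).
rewrite (eq_bigr (fun n => (#|X :&: col_region R n| - (X \subset col_region R n))%:R));
  last by move=> n _; rewrite mincut_val // /col_region inE hpR.
rewrite [X in _ <= X](eq_bigr (fun n => (#|X :&: col_region L n| - (X \subset col_region L n))%:R));
  last by move=> n _; rewrite mincut_val // /col_region inE hpL.
rewrite -!natr_sum ler_nat => hle.
have hL := sum_h L X0; have hR := sum_h R X0.
have hb : (\sum_(i in X) row_weight L i = \sum_(i in X) row_weight R i)%N.
  by apply: eq_bigr => i _; exact: hbal.
move: hle hL hR hb.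
move: (\sum_(n < mL) _)%N (\sum_(n < mR) _)%N (\sum_(i in X) row_weight L i)%N
  (\sum_(i in X) row_weight R i)%N (region_count L X) (region_count R X).
move=> a b c d e f; lia.
Qed.
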